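(* Let $\mathbf A$ be a BBL transformation of bandwidth $(p,q)$ and $A=\mathbf P_{1,\infty}\mathbf A|_{\mathcal V_{1,\infty}}$ the associated infinite BBT transformation. Then $\mathbf P_{1,\infty}\ker\mathbf A\subseteq\ker P_BA$, and if the principal coefficient $a_{p'}$ is invertible, then $\ker P_BA=\mathbf P_{1,\infty}\ker\mathbf A$.
   Context: Fix $d\ge1$. $\mathcal V^S_d$: doubly infinite sequences $\{\psi_j\}_{j\in\mathbb Z}$, $\psi_j\in\mathbb C^d$. A matrix Laurent polynomial of bandwidth $(p,q)$ is $\sum_{r=p}^qa_rw^r$, integers $p\le q$, $a_r$ complex $d\times d$, $a_p\ne0\ne a_q$; its BBL transformation is $(\mathbf A\Psi)_j=\sum_ra_r\psi_{j+r}$. $p'=\min(p,0)$; the principal coefficient $a_{p'}$ equals $a_p$ if $p\le0$ and $0$ if $p>0$. $\mathcal V_{1,\infty}$ = sequences with $\psi_j=0$ for $j<1$ (identified with $\{\psi_j\}_{j\in\mathbb N}$); $\mathbf P_{1,\infty}$ zeroes all entries with $j<1$. On $\mathcal V_{1,\infty}$, $P_B$ is the projector setting $\psi_j=0$ for $j=1,\dots,-p'$ and leaving $\psi_j$ for $j>-p'$ unchanged (so $P_B=\mathbb 1$ if $p'=0$). *)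

(* Defs.v *)
From HB Require Import structures.
From mathcomp Require Import all_boot all_order all_algebra.
Set Implicit Arguments. Unset Strict Implicit. Unset Printing Implicit Defensive.
Import Order.TTheory GRing.Theory Num.Theory.
Local Open Scope ring_scope.

Definition seqV (F : fieldType) (d : nat) := int -> 'cV[F]_d.

(* A matrix Laurent polynomial of bandwidth (p,q) is given by p, q and its
   coefficient function a (only the values a r, p <= r <= q, are used). *)
Definition BBL (F : fieldType) (d : nat) (p q : int) (a : int -> 'M[F]_d)
  (psi : seqV F d) : seqV F d :=
  fun j => \sum_(k < `|q - p|%N.+1) a (p + k%:Z) *m psi (j + (p + k%:Z)).

Definition bandwidth (F : fieldType) (d : nat) (p q : int) (a : int -> 'M[F]_d)
  : Prop := p <= q /\ a p != 0 /\ a q != 0.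

Definition in_kerBBL (F : fieldType) (d : nat) (p q : int) (a : int -> 'M[F]_d)
  (psi : seqV F d) : Prop := forall j, BBL p q a psi j = 0.

Definition P1inf (F : fieldType) (d : nat) (psi : seqV F d) : seqV F d :=
  fun j => if (1 <= j) then psi j else 0.

Definition inV1inf (F : fieldType) (d : nat) (psi : seqV F d) : Prop :=
  forall j, j < 1 -> psi j = 0.

Definition pprime (p : int) : int := Num.min p 0.

(* principal coefficient a_{p'}: a_p if p <= 0, 0 otherwise *)
Definition principal_coef (F : fieldType) (d : nat) (p : int)
  (a : int -> 'M[F]_d) : 'M[F]_d := if p <= 0 then a p else 0.

(* P_B on V_{1,oo}: zero psi_j for j = 1..-p', keep psi_j for j > -p'
   (entries j < 1 are already zero on V_{1,oo} and are zeroed as well). *)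
Definition PB (F : fieldType) (d : nat) (p : int) (psi : seqV F d) : seqV F d :=
  fun j => if (- pprime p < j) then psi j else 0.

Definition BBT (F : fieldType) (d : nat) (p q : int) (a : int -> 'M[F]_d)
  (phi : seqV F d) : seqV F d := P1inf (BBL p q a phi).

Definition in_kerPBA (F : fieldType) (d : nat) (p q : int) (a : int -> 'M[F]_d)
  (phi : seqV F d) : Prop :=
  inV1inf phi /\ forall j, PB p (BBT p q a phi) j = 0.

(* Main.v *)
Require Import Defs.
From HB Require Import structures.
From mathcomp Require Import all_boot all_order all_algebra.
From mathcomp Require Import zify.
From Stdlib Require Import FunctionalExtensionality.
Import Order.TTheory GRing.Theory Num.Theory.
Local Open Scope ring_scope.

Lemma pprime_facts (p : int) : pprime p <= p /\ pprime p <= 0.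
Proof. rewrite /pprime minEle; case: ifP => h; lia. Qed.

Lemma part1 (F : fieldType) (d : nat) (p q : int) (a : int -> 'M[F]_d)
  (psi : seqV F d) : in_kerBBL p q a psi -> in_kerPBA p q a (P1inf psi).
Proof.
move=> hk; split.
  by move=> j hj; rewrite /P1inf; case: ifP => // h; lia.
move=> j; rewrite /PB; case: ifP => // hj.
have [h1 h2] := pprime_facts p.
rewrite /BBT /P1inf; have -> : (1 <= j) by lia.
rewrite -(hk j) /BBL; apply: eq_bigr => k _.
by have -> : (1 <= j + (p + k%:Z)) by lia.
Qed.

Section Ext.
Variables (F : fieldType) (d : nat) (p q : int) (a : int -> 'M[F]_d)
  (phi : seqV F d).

Fixpoint fseq (n : nat) : seqV F d :=
  match n with
  | 0%N => phi
  | n'.+1 => fun j => if j == - (n'%:Z) then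
       - (invmx (a p) *m \sum_(i < `|q - p|%N) a (p + (i.+1)%:Z) *m
            fseq n' (- (n'%:Z) + (i.+1)%:Z))
     else fseq n' j
  end.

Lemma fseq_pos m j : 1 <= j -> fseq m j = phi j.
Proof.
elim: m => //= m IH h; rewrite IH //; case: ifP => // /eqP; lia.
Qed.

Lemma fseq_stab n m : (n < m)%N -> fseq m (- (n%:Z)) = fseq n.+1 (- (n%:Z)).
Proof.
elim: m => // m IH hm.
case: (ltngtP n m) => h.
- rewrite -IH //=; case: ifP => // /eqP; lia.
- lia.
- by rewrite h.
Qed.

Definition psiE : seqV F d :=
  fun j => if 1 <= j then phi j else fseq (`|j|%N).+1 j.

Lemma fseq_psi m j : (~~ (1 <= j)) -> (`|j| < m)%N -> fseq m j = psiE j.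
Proof.
move=> h1 h2; rewrite /psiE (negbTE h1).
have ej : j = - ((`|j|%N)%:Z) by lia.
by rewrite ej fseq_stab // -ej.
Qed.

Lemma fseq_psi' n j : - (n%:Z) < j -> fseq n j = psiE j.
Proof.
move=> h; case: (boolP (1 <= j)) => hj.
  by rewrite fseq_pos // /psiE hj.
apply: fseq_psi => //; lia.
Qed.

End Ext.

Lemma unit0 (F : fieldType) (d : nat) : (0 < d)%N -> ((0 : 'M[F]_d) \in unitmx) = false.
Proof. by case: d => // d _; rewrite unitmxE det0 unitr0. Qed.

Theorem mainTheorem16 (F : fieldType) (d : nat) (hd : (0 < d)%N)
  (p q : int) (a : int -> 'M[F]_d) (hband : bandwidth p q a) :
  (forall psi : seqV F d, in_kerBBL p q a psi -> in_kerPBA p q a (P1inf psi))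
  /\
  (principal_coef p a \in unitmx ->
     forall phi : seqV F d,
       in_kerPBA p q a phi <->
       exists psi : seqV F d, in_kerBBL p q a psi /\ P1inf psi = phi).
Proof.
split; first exact: part1.
move=> hu phi; split; last first.
  by case=> psi [hk <-]; apply: part1.
case=> hV hK.
have hp : p <= 0.
  move: hu; rewrite /principal_coef; case: ifP => // _.
  by rewrite (@unit0 F d hd).
have hua : a p \in unitmx by move: hu; rewrite /principal_coef hp.
exists (@psiE F d p q a phi); split; last first.
  apply: functional_extensionality => j; rewrite /P1inf /psiE.
  case: (boolP (1 <= j)) => // h; rewrite hV //; lia.
move=> m; rewrite /BBL big_ord_recl /=.
set S := \sum_(i < _) _.
case: (boolP (m + p <= 0)) => hmp; last first.
  have := hK m; rewrite /PB /pprime.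
  have -> : (- Num.min p 0 < m). rewrite minEle hp; lia.
  rewrite /BBT /P1inf.
  have -> : (1 <= m) by lia.
  rewrite /BBL big_ord_recl /= => <-.
  rewrite /psiE addr0; have -> : (1 <= m + p) by lia.
  congr (_ + _); apply: eq_bigr => i _.
  rewrite /psiE; have -> : (1 <= m + (p + (bump 0 i)%:Z)) by rewrite /bump; lia. by [].
set n := absz (m + p).
have en : m + p = - (n%:Z) by rewrite /n; lia.
rewrite addr0 en.
have hn : ~~ (1 <= - (n%:Z)) by lia.
rewrite -(@fseq_psi F d p q a phi n.+1 _ hn); last by rewrite /n; lia.
rewrite /= eqxx mulmxN mulKVmx // /S.
rewrite [X in _ + X](_ : _ = \sum_(i < absz (q - p)) a (p + (i.+1)%:Z) *m fseq F d p q a phi n (- n%:Z + (i.+1)%:Z)) ?addNr //.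
apply: eq_bigr => i _.
rewrite fseq_psi'; last by lia.
congr (_ *m psiE _ _ _ _ _ _ _); rewrite /bump /=; lia.
Qed.
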